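(* Let $n \geqslant 5$ be odd and let $\lambda$ be a natural number with $\frac{n+3}{4} \leqslant \lambda \leqslant \frac{n-1}{2}$. Then the partition $\left(\lambda+1,\ \frac{n+3-2\lambda}{2},\ 2\times\left(\frac{n-1}{2}-\lambda\right),\ 1\times\frac{4\lambda-n-3}{2}\right)$ of $n$ corresponds to the eigenvalue $\lambda$.
   Context: In a partition, the notation $a\times t$ means that the part $a$ is repeated $t$ times (possibly $t=0$). An integer partition $(n_1,\dots,n_k)$ of $n$ (with $n_1\geqslant \dots\geqslant n_k\geqslant 1$, $\sum_j n_j=n$) is said to correspond to the eigenvalue $\lambda$ if $\lambda=\sum_{j=1}^k \frac{n_j(n_j-2j+1)}{2}$; this is the eigenvalue of the Transposition graph $T_n=\mathrm{Cay}(\mathrm{Sym}_n,T)$ ($T$ the set of all transpositions) associated with the irreducible character of $\mathrm{Sym}_n$ indexed by the partition. *)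

(* Defs.v *)
From mathcomp Require Import all_boot all_order all_algebra.
Set Implicit Arguments. Unset Strict Implicit. Unset Printing Implicit Defensive.
Import GRing.Theory Num.Theory.

Definition is_partition (n : nat) (s : seq nat) : bool :=
  [&& sorted geq s, all (fun x => 0 < x)%N s & sumn s == n].

(* lambda(s) = sum_{j=1}^k n_j (n_j - 2j + 1) / 2, computed in rat
   (the j-th part, 1-indexed, is nth 0 s (j-1)). *)
Definition part_eigenvalue (s : seq nat) : rat :=
  \sum_(i < size s)
     ((nth 0%N s i)%:R * ((nth 0%N s i)%:R - 2%:R * (i.+1)%:R + 1) / 2%:R)%R.

Definition corresponds_to (n : nat) (s : seq nat) (lam : rat) : Prop :=
  is_partition n s /\ part_eigenvalue s = lam.

(* Main.v *)
Require Import Defs.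
From mathcomp Require Import all_boot all_order all_algebra.
From mathcomp Require Import zify ring lra.
Import GRing.Theory Num.Theory.
Local Open Scope ring_scope.

Definition term (j x : nat) : rat := x%:R * (x%:R - 2%:R * (j.+1)%:R + 1) / 2%:R.

Fixpoint fe (j : nat) (s : seq nat) : rat :=
  match s with [::] => 0 | x :: s' => term j x + fe j.+1 s' end.

Lemma sum_fe s j : \sum_(i < size s) term (j + i) (nth 0%N s i) = fe j s.
Proof.
elim: s j => [|x s IH] j /=; first by rewrite big_ord0.
rewrite big_ord_recl /= addn0; congr (_ + _).
rewrite -IH; apply: eq_bigr => i _; by rewrite addnS addSn.
Qed.

Lemma fe_cat s1 s2 j : fe j (s1 ++ s2) = fe j s1 + fe (j + size s1) s2.
Proof.
elim: s1 j => [|x s IH] j /=; first by rewrite add0r addn0.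
by rewrite IH addrA addnS addSn.
Qed.

Lemma fe_nseq k c j : fe j (nseq k c) =
  k%:R * c%:R * (c%:R + 1) / 2%:R - c%:R * (k%:R * j%:R + k%:R * (k%:R + 1) / 2%:R).
Proof.
elim: k j => [|k IH] j /=; first by ring.
rewrite IH /term; field; by [].
Qed.

Lemma path_geq_nseq x k c : (c <= x)%N -> path geq x (nseq k c).
Proof. elim: k x => [|k IH] x //= h; rewrite h /=; exact: IH. Qed.

Theorem lemma5 (n lam : nat) :
  (5 <= n)%N -> odd n -> (n + 3 <= 4 * lam)%N -> (2 * lam <= n - 1)%N ->
  corresponds_to n
    ([:: lam.+1; (n + 3 - 2 * lam)./2]
       ++ nseq ((n - 1)./2 - lam) 2%N
       ++ nseq ((4 * lam - n - 3)./2) 1%N)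
    (lam%:R)%R.
Proof.
move=> h5 hodd h1 h2.
have [m hm] : exists m, n = (m.*2).+1.
  by exists n./2; rewrite -{1}(odd_double_half n) hodd.
rewrite hm in h1 h2 h5 *.
have [a ha] : exists a, m = (lam + a)%N by exists (m - lam)%N; lia.
subst m.
have [b hb] : exists b, lam = (a + b + 2)%N by exists (lam - a - 2)%N; lia.
subst lam.
have e1 : ((a + b + 2 + a).*2.+1 + 3 - 2 * (a + b + 2))%N = (a + 2).*2 by lia.
have e2 : ((a + b + 2 + a).*2.+1 - 1)%N = (a + b + 2 + a).*2 by lia.
have e3 : (4 * (a + b + 2) - (a + b + 2 + a).*2.+1 - 3)%N = b.*2 by lia.
rewrite e1 e2 e3 !doubleK.
have -> : (a + b + 2 + a - (a + b + 2))%N = a by lia.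
split.
  rewrite /is_partition /=; apply/and3P; split.
  - rewrite /= cat_path /=; apply/and3P; split; first lia.
      apply: path_geq_nseq; lia.
    apply: path_geq_nseq; case: (a) => [|a0] /=; first lia.
    by elim: a0.
  - rewrite /= all_cat !all_nseq /=; by case: (a); case: (b).
  - rewrite sumn_cat !sumn_nseq; apply/eqP; lia.
rewrite /part_eigenvalue.
have -> : \sum_(i < size ([:: (a + b + 2).+1; (a + 2)%N] ++ nseq a 2%N ++ nseq b 1%N))
   ((nth 0%N ([:: (a + b + 2).+1; (a + 2)%N] ++ nseq a 2%N ++ nseq b 1%N) i)%:R *
    ((nth 0%N ([:: (a + b + 2).+1; (a + 2)%N] ++ nseq a 2%N ++ nseq b 1%N) i)%:R
      - 2%:R * (i.+1)%:R + 1) / 2%:R)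
  = fe 0 ([:: (a + b + 2).+1; (a + 2)%N] ++ nseq a 2%N ++ nseq b 1%N).
  by rewrite -sum_fe.
rewrite fe_cat fe_cat !fe_nseq /= /term !size_nseq.
field; by [].
Qed.
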